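(* Let $q\in\mathbb{R}$ with $q\neq 0$ and let $\hbar\in\mathbb{R}$. Let $\mathcal{H}$ be the unital associative $\mathbb{C}$-algebra generated by $\hat{x},\hat{p},\hat{\Lambda}$ subject to the relations \[ q^{1/2}\hat{x}\hat{p}-q^{-1/2}\hat{p}\hat{x}=i\hbar\hat{\Lambda},\qquad \hat{\Lambda}\hat{x}=q^{-1}\hat{x}\hat{\Lambda},\qquad \hat{\Lambda}\hat{p}=q\hat{p}\hat{\Lambda}. \] Then $\mathcal{H}$ is (via the identity on generators) the iterated Ore extension \[ R=\mathbb{C}[\hat{\Lambda}][\hat{p};\sigma_{\hat{p}},\delta_{\hat{p}}][\hat{x};\sigma_{\hat{x}},\delta_{\hat{x}}] \] whose data are given by \[ \sigma_{\hat{p}}(\hat{\Lambda})=q^{-1}\hat{\Lambda},\quad \delta_{\hat{p}}(\hat{\Lambda})=0,\quad \sigma_{\hat{x}}(\hat{\Lambda})=q\hat{\Lambda},\quad \delta_{\hat{x}}(\hat{\Lambda})=0,\quad \sigma_{\hat{x}}(\hat{p})=q^{-1}\hat{p},\quad \delta_{\hat{x}}(\hat{p})=i\hbar q^{-1/2}\hat{\Lambda}; \] in particular these prescriptions define an automorphism $\sigma_{\hat{p}}$ of $\mathbb{C}[\hat{\Lambda}]$ with $\sigma_{\hat{p}}$-derivation $\delta_{\hat{p}}$, and an automorphism $\sigma_{\hat{x}}$ of $\mathbb{C}[\hat{\Lambda}][\hat{p};\sigma_{\hat{p}},\delta_{\hat{p}}]$ with $\sigma_{\hat{x}}$-derivation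 $\delta_{\hat{x}}$.
   Context: An Ore extension $A[t;\sigma,\delta]$ of a ring $A$, for a ring endomorphism $\sigma$ of $A$ and a $\sigma$-derivation $\delta$ of $A$ (i.e. $\delta(ab)=\sigma(a)\delta(b)+\delta(a)b$), is the ring of polynomials $\sum a_i t^i$ with multiplication determined by $ta=\sigma(a)t+\delta(a)$ for $a\in A$. The algebra above is the $q$-deformed Heisenberg algebra of Wess (position $\hat{x}$, momentum $\hat{p}$, auxiliary generator $\hat{\Lambda}$). *)

(* Defs.v *)
From HB Require Import structures.
From mathcomp Require Import all_boot all_order all_algebra.
From mathcomp Require Import complex reals.

Set Implicit Arguments.
Unset Strict Implicit.
Unset Printing Implicit Defensive.

Import Order.TTheory GRing.Theory Num.Theory.
Local Open Scope ring_scope.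

(* d is a sigma-derivation of A: d(ab) = s(a) d(b) + d(a) b.
   (Additivity / K-linearity is imposed by taking d : {linear A -> A}.) *)
Definition sigma_derivation (A : nzRingType) (s d : A -> A) : Prop :=
  forall a b : A, d (a * b) = s a * d b + d a * b.

(* S = A[t; sigma, delta] (Goodearl--Warfield's definition of an Ore
   extension): A embeds in S via iota, t a = sigma(a) t + delta(a) for a in A,
   and S is a free left A-module with basis 1, t, t^2, ...
   (every element is a finite sum  sum_i a_i t^i, and such sums vanish only
   if all coefficients vanish). *)
Definition is_ore_ext (K : fieldType) (A S : algType K)
    (iota : {lrmorphism A -> S}) (sigma delta : A -> A) (t : S) : Prop :=
  [/\ forall a : A, t * iota a = iota (sigma a) * t + iota (delta a),
      forall s : S, exists c : seq A,
        s = \sum_(i < size c) iota c`_i * t ^+ i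
    & forall c : seq A,
        \sum_(i < size c) iota c`_i * t ^+ i = 0 -> forall i, c`_i = 0 ].

Local Open Scope complex_scope.

(* q^{1/2} : the principal complex square root of q (q real, q may be < 0). *)
Definition sqrtq (R : realType) (q : R) : R[i] := sqrtc (q%:C).

Definition iC (R : realType) : R[i] := Complex 0 1.

Definition heis_rel (R : realType) (q hb : R) (B : algType R[i])
    (x p L : B) : Prop :=
  [/\ sqrtq q *: (x * p) - (sqrtq q)^-1 *: (p * x) = (iC R * hb%:C) *: L,
      L * x = (q%:C)^-1 *: (x * L)
    & L * p = q%:C *: (p * L) ].

Definition heis_presentation (R : realType) (q hb : R) (H : algType R[i])
    (x p L : H) : Prop :=
  heis_rel q hb x p L /\
  forall (B : algType R[i]) (x' p' L' : B), heis_rel q hb x' p' L' ->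
    exists f : {lrmorphism H -> B},
      [/\ f x = x', f p = p', f L = L'
        & forall g : {lrmorphism H -> B},
            g x = x' -> g p = p' -> g L = L' -> g =1 f].

(* Main.v *)
Require Import Defs.
From HB Require Import structures.
From mathcomp Require Import all_boot all_order all_algebra.
From mathcomp Require Import complex reals.
From mathcomp Require Import boolp ring.
Set Implicit Arguments.
Unset Strict Implicit.
Unset Printing Implicit Defensive.
Import Order.TTheory GRing.Theory Num.Theory.
Local Open Scope ring_scope.

Section EndDef.
Variable K : fieldType.
Definition V := nat -> nat -> nat -> K.
Definition vadd (u v : V) : V := fun a b c => u a b c + v a b c.
Definition vsc (k : K) (v : V) : V := fun a b c => k * v a b c.
Lemma vext (u v : V) : (forall a b c, u a b c = v a b c) -> u = v.
Proof. move=> h; apply: funext => a; apply: funext => b; apply: funext => c; exact: h. Qed.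
Record End := MkEnd { fn : V -> V;
  fnD : forall u v, fn (vadd u v) = vadd (fn u) (fn v);
  fnZ : forall k v, fn (vsc k v) = vsc k (fn v) }.
Lemma endP (f g : End) : (forall v a b c, fn f v a b c = fn g v a b c) -> f = g.
Proof.
case: f g => f fD fZ [g gD gZ] /= h.
have E : f = g by apply: funext => v; apply: vext; exact: h.
subst g; congr MkEnd; exact: Prop_irrelevance.
Qed.
End EndDef.

HB.instance Definition _ (K : fieldType) := gen_eqMixin (End K).
HB.instance Definition _ (K : fieldType) := gen_choiceMixin (End K).

Section EndOps.
Variable K : fieldType.
Implicit Types f g h : End K.
Local Notation V := (V K).
Definition e0 : End K.
Proof. refine (@MkEnd K (fun _ => fun _ _ _ => 0) _ _).
- by move=> u v; apply: vext => a b c; rewrite /vadd addr0.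
- by move=> k v; apply: vext => a b c; rewrite /vsc mulr0.
Defined.
Definition eadd f g : End K.
Proof. refine (@MkEnd K (fun v => vadd (fn f v) (fn g v)) _ _).
- by move=> u v; rewrite !fnD; apply: vext => a b c; rewrite /vadd; ring.
- by move=> k v; rewrite !fnZ; apply: vext => a b c; rewrite /vadd /vsc; ring.
Defined.
Definition eopp f : End K.
Proof. refine (@MkEnd K (fun v => fun a b c => - fn f v a b c) _ _).
- by move=> u v; rewrite !fnD; apply: vext => a b c; rewrite /vadd; ring.
- by move=> k v; rewrite !fnZ; apply: vext => a b c; rewrite /vadd /vsc; ring.
Defined.
Definition e1 : End K.
Proof. by refine (@MkEnd K (fun v => v) _ _). Defined.
Definition emul f g : End K.
Proof. refine (@MkEnd K (fun v => fn f (fn g v)) _ _).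
- by move=> u v; rewrite !fnD.
- by move=> k v; rewrite !fnZ.
Defined.
Definition escale (k : K) f : End K.
Proof. refine (@MkEnd K (fun v => vsc k (fn f v)) _ _).
- by move=> u v; rewrite !fnD; apply: vext => a b c; rewrite /vadd /vsc; ring.
- by move=> k' v; rewrite !fnZ; apply: vext => a b c; rewrite /vadd /vsc; ring.
Defined.

Lemma eaddA : associative eadd.
Proof. by move=> f g h; apply: endP => v a b c /=; rewrite /vadd addrA. Qed.
Lemma eaddC : commutative eadd.
Proof. by move=> f g; apply: endP => v a b c /=; rewrite /vadd addrC. Qed.
Lemma eadd0 : left_id e0 eadd.
Proof. by move=> f; apply: endP => v a b c /=; rewrite /vadd add0r. Qed.
Lemma eaddN : left_inverse e0 eopp eadd.
Proof. by move=> f; apply: endP => v a b c /=; rewrite /vadd addNr. Qed.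
HB.instance Definition _ := GRing.isZmodule.Build (End K) eaddA eaddC eadd0 eaddN.

Lemma emulA : associative emul.
Proof. by move=> f g h; apply: endP. Qed.
Lemma emul1 : left_id e1 emul.
Proof. by move=> f; apply: endP. Qed.
Lemma emulr1 : right_id e1 emul.
Proof. by move=> f; apply: endP. Qed.
Lemma emulDl : left_distributive emul +%R.
Proof. by move=> f g h; apply: endP. Qed.
Lemma emulDr : right_distributive emul +%R.
Proof. by move=> f g h; apply: endP => v a b c /=; rewrite fnD. Qed.
Lemma e1_neq0 : e1 != 0.
Proof.
apply/eqP => /(congr1 (fun f => fn f (fun _ _ _ => 1) 0%N 0%N 0%N)) /=.
by move/eqP; rewrite oner_eq0.
Qed.
HB.instance Definition _ := GRing.Zmodule_isNzRing.Build (End K)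
  emulA emul1 emulr1 emulDl emulDr e1_neq0.

Lemma escaleA a b f : escale a (escale b f) = escale (a * b) f.
Proof. by apply: endP => v x y z /=; rewrite /vsc mulrA. Qed.
Lemma escale1 : left_id 1 escale.
Proof. by move=> f; apply: endP => v x y z /=; rewrite /vsc mul1r. Qed.
Lemma escaleDr : right_distributive escale +%R.
Proof. by move=> k f g; apply: endP => v x y z /=; rewrite /vsc /vadd mulrDr. Qed.
Lemma escaleDl f : {morph escale^~ f : a b / a + b}.
Proof. by move=> a b; apply: endP => v x y z /=; rewrite /vsc /vadd mulrDl. Qed.
HB.instance Definition _ := GRing.Zmodule_isLmodule.Build K (End K)
  escaleA escale1 escaleDr escaleDl.
Lemma escaleAl (a : K) (f g : End K) : a *: (f * g) = (a *: f) * g.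
Proof. by apply: endP. Qed.
HB.instance Definition _ := GRing.Lmodule_isLalgebra.Build K (End K) escaleAl.
Lemma escaleAr (a : K) (f g : End K) : a *: (f * g) = f * (a *: g).
Proof. by apply: endP => v x y z /=; rewrite fnZ. Qed.
HB.instance Definition _ := GRing.Lalgebra_isAlgebra.Build K (End K) escaleAr.
End EndOps.



Section Ops.
Variable K : fieldType.
Variables (Q kap : K).
Local Notation V := (V K).

Definition qn (b : nat) : K := \sum_(j < b) ((Q ^+ 2)^-1) ^+ j.
Lemma qnS b : qn b.+1 = 1 + (Q ^+ 2)^-1 * qn b.
Proof. by rewrite /qn big_ord_recl expr0 mulr_sumr; congr (_ + _); apply: eq_bigr => i _; rewrite /= /bump /= add1n exprS. Qed.
Lemma qn0 : qn 0 = 0. Proof. by rewrite /qn big_ord0. Qed.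

Definition Lf (v : V) : V := fun a b c => match a with 0 => 0 | a'.+1 => v a' b c end.
Definition Pf (v : V) : V := fun a b c => match b with 0 => 0 | b'.+1 => (Q ^+ a)^-1 * v a b' c end.
Definition Xf (v : V) : V := fun a b c =>
  (match c with 0 => 0 | c'.+1 => Q ^+ a / Q ^+ b * v a b c' end) +
  (match a with 0 => 0 | a'.+1 => kap * Q ^+ a' * qn b.+1 * v a' b.+1 c end).

Definition Lop : End K.
Proof. refine (@MkEnd K Lf _ _).
- by move=> u v; apply: vext => -[|a] b c; rewrite /Lf /=; rewrite /vadd ?addr0.
- by move=> k v; apply: vext => -[|a] b c; rewrite /Lf /=; rewrite /vsc ?mulr0.
Defined.
Definition Pop : End K.
Proof. refine (@MkEnd K Pf _ _).
- by move=> u v; apply: vext => a [|b] c; rewrite /Pf /=; rewrite /vadd ?addr0 // mulrDr.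
- by move=> k v; apply: vext => a [|b] c; rewrite /Pf /=; rewrite /vsc ?mulr0 //; ring.
Defined.
Definition Xop : End K.
Proof. refine (@MkEnd K Xf _ _).
- by move=> u v; apply: vext => -[|a] b [|c]; rewrite /Xf /vadd /=; ring.
- by move=> k v; apply: vext => -[|a] b [|c]; rewrite /Xf /vsc /=; ring.
Defined.

Lemma rel2 : Q != 0 -> Lop * Xop = Q^-1 *: (Xop * Lop).
Proof.
move=> Q0; apply: endP => v a b c /=; rewrite /vsc /Xf /Lf.
case: a => [|a]; case: c => [|c]; rewrite ?exprS; try field; try by rewrite ?expf_neq0 ?mulf_neq0.
all: case: a => [|a]; rewrite ?exprS; try field; by rewrite ?expf_neq0 ?mulf_neq0.
Qed.

Lemma rel3 : Q != 0 -> Lop * Pop = Q *: (Pop * Lop).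
Proof.
move=> Q0; apply: endP => v a b c /=; rewrite /vsc /Pf /Lf.
case: a => [|a]; case: b => [|b]; rewrite ?exprS //=; try field.
all: by rewrite ?(expf_neq0, Q0, oner_neq0, andbT).
Qed.

Lemma rel1 (s c0 : K) : s != 0 -> Q = s ^+ 2 -> kap * s = c0 ->
  s *: (Xop * Pop) - s^-1 *: (Pop * Xop) = c0 *: Lop.
Proof.
move=> s0 Qs ks; apply: endP => v a b c /=; rewrite /vsc /vadd /Pf /Lf /Xf -ks.
case: a => [|a]; case: b => [|b]; case: c => [|c]; rewrite ?qnS ?qn0 ?exprS ?Qs; try field.
all: by rewrite ?(expf_neq0, s0, oner_neq0).
Qed.
End Ops.
Lemma qnSr (K : fieldType) (Q : K) b : qn Q b.+1 = qn Q b + ((Q ^+ 2)^-1) ^+ b.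
Proof. by rewrite /qn big_ord_recr. Qed.

Section Dels.
Variables (K : fieldType) (Q kap : K).
Definition del (a b c : nat) : V K := fun a' b' c' => ((a' == a) && (b' == b) && (c' == c))%:R.
Lemma Xop_del c : fn (Xop Q kap) (del 0 0 c) = del 0 0 c.+1.
Proof.
apply: vext => a' b' c'; rewrite /= /Xf /del.
case: a' => [|a']; case: b' => [|b']; case: c' => [|c'] /=; rewrite ?andbF ?mulr0 ?addr0 ?expr0 ?divr1 ?mul1r //.
Qed.
Lemma Pop_del b c : fn (Pop Q) (del 0 b c) = del 0 b.+1 c.
Proof.
apply: vext => a' b' c'; rewrite /= /Pf /del.
case: a' => [|a']; case: b' => [|b'] /=; rewrite ?andbF ?mulr0 ?expr0 ?invr1 ?mul1r //.
Qed.
Lemma Lop_del a b c : fn (Lop K) (del a b c) = del a.+1 b c.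
Proof. by apply: vext => a' b' c'; rewrite /= /Lf /del; case: a'. Qed.
Lemma fn_mul (f g : End K) v : fn (f * g) v = fn f (fn g v). Proof. by []. Qed.
Lemma fn_exp (f : End K) n v : fn (f ^+ n) v = iter n (fn f) v.
Proof. by elim: n => [|n IH] //=; rewrite exprS /= IH. Qed.
Lemma mon_del a b c : fn (Lop K ^+ a * Pop Q ^+ b * Xop Q kap ^+ c) (del 0 0 0) = del a b c.
Proof.
rewrite !fn_mul !fn_exp.
have -> : iter c (fn (Xop Q kap)) (del 0 0 0) = del 0 0 c by elim: c => // c IH; rewrite iterS IH Xop_del.
have -> : iter b (fn (Pop Q)) (del 0 0 c) = del 0 b c by elim: b => // b IH; rewrite iterS IH Pop_del.
by elim: a => // a IH; rewrite iterS IH Lop_del.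
Qed.
End Dels.


Definition lrpack (K : fieldType) (A B : algType K) (f : A -> B)
  (fB : zmod_morphism f) (fM : monoid_morphism f) (fZ : scalable f) : A -> B := f.
HB.instance Definition _ (K : fieldType) (A B : algType K) (f : A -> B) (fB : zmod_morphism f) (fM : monoid_morphism f) (fZ : scalable f) :=
  GRing.isZmodMorphism.Build A B (@lrpack K A B f fB fM fZ) fB.
HB.instance Definition _ (K : fieldType) (A B : algType K) (f : A -> B) (fB : zmod_morphism f) (fM : monoid_morphism f) (fZ : scalable f) :=
  GRing.isMonoidMorphism.Build A B (@lrpack K A B f fB fM fZ) fM.
HB.instance Definition _ (K : fieldType) (A B : algType K) (f : A -> B) (fB : zmod_morphism f) (fM : monoid_morphism f) (fZ : scalable f) :=
  GRing.isScalable.Build K A B *:%R (@lrpack K A B f fB fM fZ) fZ.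

Definition linpack (K : fieldType) (A B : lmodType K) (f : A -> B)
  (fB : zmod_morphism f) (fZ : scalable f) : A -> B := f.
HB.instance Definition _ (K : fieldType) (A B : lmodType K) (f : A -> B) (fB : zmod_morphism f) (fZ : scalable f) :=
  GRing.isZmodMorphism.Build A B (@linpack K A B f fB fZ) fB.
HB.instance Definition _ (K : fieldType) (A B : lmodType K) (f : A -> B) (fB : zmod_morphism f) (fZ : scalable f) :=
  GRing.isScalable.Build K A B *:%R (@linpack K A B f fB fZ) fZ.

Lemma sum_delta (K : nzRingType) n (F : nat -> K) k : (k < n)%N ->
  \sum_(i < n) F i * (k == i)%:R = F k.
Proof.
move=> kn; rewrite (bigD1 (Ordinal kn)) //= eqxx mulr1 big1 ?addr0 // => i.
by rewrite -val_eqE /= eq_sym => /negbTE ->; rewrite mulr0.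
Qed.
Lemma sum_delta0 (K : nzRingType) n (F : nat -> K) k : (n <= k)%N ->
  \sum_(i < n) F i * (k == i)%:R = 0.
Proof.
move=> kn; rewrite big1 // => i _.
have -> : (k == i) = false by apply/negbTE; rewrite neq_ltn (leq_trans (ltn_ord i) kn) orbT.
by rewrite mulr0.
Qed.

Section Ssum.
Variables (A M : zmodType) (F : A -> nat -> M).
Hypothesis F0 : forall i, F 0 i = 0.
Definition ssum (c : seq A) := \sum_(i < size c) F c`_i i.
Lemma ssum_widen c n : (size c <= n)%N -> ssum c = \sum_(i < n) F c`_i i.
Proof.
move=> hn; rewrite /ssum (big_ord_widen n (fun i => F c`_i i)) // big_mkcond.
apply: eq_bigr => i _; case: ifP => // /negbT; rewrite -leqNgt => h.
by rewrite nth_default.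
Qed.
Hypothesis FD : forall i a b, F (a + b) i = F a i + F b i.
Lemma ssum_add c1 c2 : ssum c1 + ssum c2 =
  ssum (mkseq (fun i => c1`_i + c2`_i) (maxn (size c1) (size c2))).
Proof.
rewrite (@ssum_widen c1 (maxn (size c1) (size c2))) ?leq_maxl //.
rewrite (@ssum_widen c2 (maxn (size c1) (size c2))) ?leq_maxr //.
rewrite /ssum size_mkseq -big_split; apply: eq_bigr => i _.
by rewrite nth_mkseq // FD.
Qed.
End Ssum.

Section HornerL.
Variables (K : fieldType) (A : algType K) (a : A).
Lemma hornerl_zm : zmod_morphism (horner_alg a). Proof. exact: rmorphB. Qed.
Lemma hornerl_mm : monoid_morphism (horner_alg a). Proof. by split; [exact: rmorph1 | exact: rmorphM]. Qed.
Lemma hornerl_sc : scalable (horner_alg a).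
Proof. by move=> k P; rewrite -mul_polyC rmorphM /= horner_algC mulr_algl. Qed.
Definition hornerl : {lrmorphism {poly K} -> A} := lrpack hornerl_zm hornerl_mm hornerl_sc.
Lemma hornerlX : hornerl 'X = a. Proof. exact: horner_algX. Qed.
Lemma hornerlC k : hornerl k%:P = k%:A. Proof. exact: horner_algC. Qed.
End HornerL.

Lemma horner_morph_gen (K : fieldType) (A B : algType K) (f : A -> B)
  (f0 : f 0 = 0) (fD : {morph f : u v / u + v}) (fM : {morph f : u v / u * v})
  (f1 : f 1 = 1) (fZ : scalable f) (a : A) P :
  f (horner_alg a P) = horner_alg (f a) P.
Proof.
elim/poly_ind: P => [|P c IH]; first by rewrite !rmorph0.
rewrite !rmorphD !rmorphM /= fD fM IH !horner_algX !horner_algC.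
by rewrite fZ f1.
Qed.

Section HalgComp.
Variable K : fieldType.
Lemma halg_comp (A : algType K) (a : A) (b : {poly K}) P :
  horner_alg a (horner_alg b P) = horner_alg (horner_alg a b) P.
Proof.
apply: horner_morph_gen.
- exact: rmorph0.
- exact: rmorphD.
- exact: rmorphM.
- exact: rmorph1.
- exact: hornerl_sc.
Qed.
Lemma halgX (P : {poly K}) : horner_alg 'X P = P.
Proof.
elim/poly_ind: P => [|P c IH]; first by rewrite rmorph0.
by rewrite rmorphD rmorphM /= IH horner_algX horner_algC alg_polyC.
Qed.
Lemma halg_scaleK (k : K) : k != 0 ->
  cancel (horner_alg (k *: 'X)) (horner_alg (k^-1 *: 'X)).
Proof.
move=> k0 P; rewrite halg_comp.
have -> : horner_alg (k^-1 *: 'X) (k *: 'X) = 'X.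
  by rewrite hornerl_sc /= horner_algX scalerA mulfV // scale1r.
exact: halgX.
Qed.
End HalgComp.

Local Open Scope complex_scope.

Section Heis.
Variables (R : realType) (q hb : R) (H : algType R[i]) (x p L : H).
Hypothesis q0 : q != 0.
Hypothesis Hpres : heis_presentation q hb x p L.
Local Notation C := R[i].
Let Q : C := q%:C.
Let s : C := sqrtq q.
Let c0 : C := iC R * hb%:C.
Let kap : C := c0 * s^-1.

Lemma Q0 : Q != 0.
Proof. by apply: contra q0 => /eqP [->]. Qed.
Lemma sQ : s ^+ 2 = Q.
Proof. exact: sqr_sqrtc. Qed.
Lemma s0 : s != 0.
Proof. by apply: contra Q0 => /eqP s0; rewrite -sQ s0 expr0n. Qed.

Lemma relH : heis_rel q hb x p L. Proof. by case: Hpres. Qed.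

Lemma xL : x * L = Q *: (L * x).
Proof. case: relH => _ -> _; by rewrite scalerA mulfV ?Q0 // scale1r. Qed.
Lemma pL : p * L = Q^-1 *: (L * p).
Proof. case: relH => _ _ ->; by rewrite scalerA mulVf ?Q0 // scale1r. Qed.
Lemma xp : x * p = Q^-1 *: (p * x) + kap *: L.
Proof.
case: relH => /eqP; rewrite subr_eq => /eqP e _ _.
have -> : x * p = s^-1 *: (s *: (x * p)) by rewrite scalerA mulVf ?s0 // scale1r.
rewrite e addrC scalerDr !scalerA -sQ /kap; congr (_ *: _ + _ *: _).
  by rewrite expr2 invfM. by rewrite mulrC.
Qed.

Lemma pLn a : p * L ^+ a = (Q^-1) ^+ a *: (L ^+ a * p).
Proof.
elim: a => [|a IH]; first by rewrite !expr0 mulr1 mul1r scale1r.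
rewrite exprSr mulrA IH -scalerAl -[L ^+ a * p * L]mulrA pL -scalerAr scalerA.
by rewrite mulrA -!exprSr.
Qed.
Lemma pnL b : p ^+ b * L = (Q^-1) ^+ b *: (L * p ^+ b).
Proof.
elim: b => [|b IH]; first by rewrite !expr0 mulr1 mul1r scale1r.
rewrite [p ^+ b.+1]exprS -mulrA IH -scalerAr [p * (L * _)]mulrA pL -scalerAl scalerA.
by rewrite -mulrA -exprSr.
Qed.
Lemma xLn a : x * L ^+ a = Q ^+ a *: (L ^+ a * x).
Proof.
elim: a => [|a IH]; first by rewrite !expr0 mulr1 mul1r scale1r.
rewrite exprSr mulrA IH -scalerAl -[L ^+ a * x * L]mulrA xL -scalerAr scalerA.
by rewrite mulrA -!exprSr.
Qed.
Lemma xpn b : x * p ^+ b = (Q^-1) ^+ b *: (p ^+ b * x) + (kap * qn Q b) *: (L * p ^+ b.-1).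
Proof.
elim: b => [|b IH]; first by rewrite qn0 !expr0 mulr1 mul1r scale1r mulr0 scale0r addr0.
have e1 : p ^+ b * (x * p) = Q^-1 *: (p ^+ b.+1 * x) + (kap * (Q^-1) ^+ b) *: (L * p ^+ b).
  by rewrite xp mulrDr -!scalerAr mulrA -exprSr pnL scalerA.
have e2 : (kap * qn Q b) *: (L * p ^+ b.-1 * p) = (kap * qn Q b) *: (L * p ^+ b).
  case: b {IH e1} => [|b]; first by rewrite qn0 mulr0 !scale0r.
  by rewrite -mulrA -exprSr.
have -> : x * p ^+ b.+1 = x * p ^+ b * p by rewrite exprSr mulrA.
rewrite IH mulrDl -!scalerAl -[p ^+ b * x * p]mulrA e1 e2 /=.
rewrite scalerDr !scalerA -addrA -scalerDl qnSr; congr (_ *: _ + _ *: _).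
  by rewrite -exprSr.
have hq : ((Q ^+ 2)^-1) ^+ b = (Q^-1)^+b * (Q^-1)^+b by rewrite -exprVn -exprMn -expr2.
rewrite hq; ring.
Qed.

Definition tA (t : C * nat * nat) : H := t.1.1 *: (L ^+ t.1.2 * p ^+ t.2).
Definition evA (u : seq (C * nat * nat)) : H := \sum_(t <- u) tA t.
Definition inA (h : H) : Prop := exists u, h = evA u.

Lemma inA_sum (I : Type) (r : seq I) (f : I -> H) : (forall i, inA (f i)) -> inA (\sum_(i <- r) f i).
Proof.
move=> hf; elim: r => [|i r [u IH]]; first by exists [::]; rewrite /evA !big_nil.
case: (hf i) => v hv; exists (v ++ u); by rewrite big_cons IH hv /evA big_cat.
Qed.
Lemma inAmon k a b : inA (k *: (L ^+ a * p ^+ b)).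
Proof. by exists [:: (k, a, b)]; rewrite /evA big_seq1. Qed.
Lemma inAZ k h : inA h -> inA (k *: h).
Proof. by case=> u ->; rewrite /evA scaler_sumr; apply: inA_sum => t; rewrite scalerA; apply: inAmon. Qed.
Lemma inAD h1 h2 : inA h1 -> inA h2 -> inA (h1 + h2).
Proof. by case=> u -> [v ->]; exists (u ++ v); rewrite /evA big_cat. Qed.
Lemma inAL h : inA h -> inA (L * h).
Proof.
case=> u ->; rewrite /evA mulr_sumr; apply: inA_sum => t.
by rewrite /tA -scalerAr mulrA -exprS; apply: inAmon.
Qed.
Lemma inAp h : inA h -> inA (p * h).
Proof.
case=> u ->; rewrite /evA mulr_sumr; apply: inA_sum => t.
by rewrite /tA -scalerAr mulrA pLn -scalerAl scalerA -mulrA -exprS; apply: inAmon.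
Qed.
Lemma inALn n h : inA h -> inA (L ^+ n * h).
Proof. by move=> hh; elim: n => [|n IH]; rewrite ?expr0 ?mul1r // exprS -mulrA; apply: inAL. Qed.
Lemma inApn n h : inA h -> inA (p ^+ n * h).
Proof. by move=> hh; elim: n => [|n IH]; rewrite ?expr0 ?mul1r // exprS -mulrA; apply: inAp. Qed.
Lemma inAM h1 h2 : inA h1 -> inA h2 -> inA (h1 * h2).
Proof.
case=> u -> h2A; rewrite /evA mulr_suml; apply: inA_sum => t.
by rewrite /tA -scalerAl -mulrA; apply/inAZ/inALn/inApn.
Qed.
Lemma inA1 : inA 1.
Proof. by have := inAmon 1 0 0; rewrite !expr0 mulr1 scale1r. Qed.
Lemma inA0 : inA 0.
Proof. by exists [::]; rewrite /evA big_nil. Qed.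

Definition A1pred : {pred H} := fun h => `[< inA h >].
Lemma A1pred_closed : GRing.subsemialg_closed A1pred.
Proof.
split.
- exact/asboolP/inA1.
- split; first exact/asboolP/inA0.
  by move=> a b /asboolP ha /asboolP hb2; apply/asboolP/inAD.
- by move=> k a /asboolP ha; apply/asboolP/inAZ.
- by move=> a b /asboolP ha /asboolP hb2; apply/asboolP/inAM.
Qed.
HB.instance Definition _ := GRing.isSubalgClosed.Build C H A1pred A1pred_closed.
Record A1 := MkA1 { aval : H; _ : aval \in A1pred }.
HB.instance Definition _ := [isSub for aval].
HB.instance Definition _ := [Choice of A1 by <:].
HB.instance Definition _ := [SubChoice_isSubAlgebra of A1 by <:].
Lemma val_zm : zmod_morphism (val : A1 -> H). Proof. exact: rmorphB. Qed.
Lemma val_mm : monoid_morphism (val : A1 -> H). Proof. by split; [exact: rmorph1 | exact: rmorphM]. Qed.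
Lemma val_sc : scalable (val : A1 -> H). Proof. by move=> k a; rewrite linearZ. Qed.
Definition i1f : {lrmorphism A1 -> H} := lrpack val_zm val_mm val_sc.

Lemma relsEnd : heis_rel q hb (Xop Q kap) (Pop Q) (Lop C).
Proof.
split.
- apply: rel1; [exact: s0 | by rewrite sQ | by rewrite /kap -mulrA mulVf ?s0 ?mulr1].
- exact: rel2 Q0.
- exact: rel3 Q0.
Qed.

Definition phi : {lrmorphism H -> End C} := proj1_sig (cid (proj2 Hpres _ _ _ _ relsEnd)).
Definition phif (h : H) : End C := phi h.
Lemma phif_spec : [/\ phif x = Xop Q kap, phif p = Pop Q & phif L = Lop C].
Proof. rewrite /phif /phi; have [h1 h2 h3 _] := proj2_sig (cid (proj2 Hpres _ _ _ _ relsEnd)); by split. Qed.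
Lemma phifD a b : phif (a + b) = phif a + phif b. Proof. exact: rmorphD. Qed.
Lemma phif0 : phif 0 = 0. Proof. exact: rmorph0. Qed.
Lemma phifZ k a : phif (k *: a) = k *: phif a. Proof. exact: linearZ. Qed.
Lemma phifM a b : phif (a * b) = phif a * phif b. Proof. exact: rmorphM. Qed.
Lemma phifX a n : phif (a ^+ n) = phif a ^+ n. Proof. exact: rmorphXn. Qed.

Definition crd (h : H) (a b c : nat) : C := fn (phif h) (del C 0 0 0) a b c.
Lemma crdD h1 h2 a b c : crd (h1 + h2) a b c = crd h1 a b c + crd h2 a b c.
Proof. by rewrite /crd phifD. Qed.
Lemma crd0 a b c : crd 0 a b c = 0.
Proof. by rewrite /crd phif0. Qed.
Lemma crdZ k h a b c : crd (k *: h) a b c = k * crd h a b c.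
Proof. by rewrite /crd phifZ. Qed.
Lemma crd_sum (I : Type) (r : seq I) (P : pred I) (F : I -> H) a b c :
  crd (\sum_(i <- r | P i) F i) a b c = \sum_(i <- r | P i) crd (F i) a b c.
Proof. by apply: (big_morph (fun h => crd h a b c)) => [h1 h2|]; [exact: crdD | exact: crd0]. Qed.
Lemma crd_mon a b c a' b' c' : crd (L ^+ a * p ^+ b * x ^+ c) a' b' c' = del C a b c a' b' c'.
Proof. by case: phif_spec => hx hp hl; rewrite /crd !phifM !phifX hx hp hl mon_del. Qed.

Definition hL (P : {poly C}) : H := horner_alg L P.
Lemma hLE (P : {poly C}) n : (size P <= n)%N -> hL P = \sum_(i < n) P`_i *: L ^+ i.
Proof.
move=> hn; rewrite /hL /horner_alg /horner_morph (@horner_coef_wide _ n).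
  by apply: eq_bigr => i _; rewrite coef_map /= mulr_algl.
by apply: leq_trans hn; rewrite /map_poly size_poly.
Qed.
Lemma hLM P1 P2 : hL (P1 * P2) = hL P1 * hL P2. Proof. exact: rmorphM. Qed.
Lemma hLC k : hL k%:P = k%:A. Proof. exact: horner_algC. Qed.
Lemma hLD P1 P2 : hL (P1 + P2) = hL P1 + hL P2. Proof. exact: rmorphD. Qed.
Lemma hLZ k P : hL (k *: P) = k *: hL P. Proof. by rewrite -mul_polyC hLM hLC mulr_algl. Qed.
Lemma hL0 : hL 0 = 0. Proof. exact: rmorph0. Qed.
Lemma hLX : hL 'X = L. Proof. exact: horner_algX. Qed.
Lemma hLXn a : hL ('X ^+ a) = L ^+ a. Proof. by rewrite /hL rmorphXn /= horner_algX. Qed.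

Lemma crd_hpx (P : {poly C}) b c a' b' c' :
  crd (hL P * p ^+ b * x ^+ c) a' b' c' = P`_a' * ((b' == b) && (c' == c))%:R.
Proof.
rewrite (@hLE P (size P + a'.+1)) ?leq_addr // !mulr_suml crd_sum.
under eq_bigr => i _ do rewrite -!scalerAl crdZ crd_mon /del -andbA -mulnb natrM mulrA.
rewrite -mulr_suml; congr (_ * _); apply: sum_delta.
by rewrite addnS ltnS leq_addl.
Qed.

Lemma crd_big n m (F : nat -> nat -> {poly C}) a' b' c' :
  crd (\sum_(i < n) \sum_(j < m) hL (F i j) * p ^+ j * x ^+ i) a' b' c' =
  if (c' < n)%N && (b' < m)%N then (F c' b')`_a' else 0.
Proof.
rewrite crd_sum.
under eq_bigr => i _ do rewrite crd_sum.
under eq_bigr => i _ do under eq_bigr => j _ do rewrite crd_hpx -mulnb natrM mulrA.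
under eq_bigr => i _ do rewrite -mulr_suml.
case: (ltnP c' n) => hc /=; last exact: (sum_delta0 (fun i => \sum_(j < m) (F i j)`_a' * (b' == j)%:R)).
rewrite (@sum_delta _ _ (fun i => \sum_(j < m) (F i j)`_a' * (b' == j)%:R)) //.
case: (ltnP b' m) => hb' /=; first exact: (sum_delta (fun j => (F c' j)`_a')).
exact: (sum_delta0 (fun j => (F c' j)`_a')).
Qed.

Lemma indep_core n m (F : nat -> nat -> {poly C}) :
  \sum_(i < n) \sum_(j < m) hL (F i j) * p ^+ j * x ^+ i = 0 ->
  forall i j, (i < n)%N -> (j < m)%N -> F i j = 0.
Proof.
move=> h0 i j hi hj; apply/polyP => a; rewrite coef0.
by have := crd_big n m F a j i; rewrite h0 crd0 hi hj /= => <-.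
Qed.

Definition hpF (P : {poly C}) (j : nat) : H := hL P * p ^+ j.
Lemma hpF0 j : hpF 0 j = 0. Proof. by rewrite /hpF hL0 mul0r. Qed.
Lemma hpFD j P1 P2 : hpF (P1 + P2) j = hpF P1 j + hpF P2 j. Proof. by rewrite /hpF hLD mulrDl. Qed.
Definition spanA (h : H) := exists W, h = ssum hpF W.
Lemma spanA_add h1 h2 : spanA h1 -> spanA h2 -> spanA (h1 + h2).
Proof. by case=> W1 -> [W2 ->]; eexists; apply: ssum_add; [exact: hpF0 | exact: hpFD]. Qed.
Lemma spanA_mon k a b : spanA (k *: (L ^+ a * p ^+ b)).
Proof.
exists (rcons (nseq b 0) (k *: 'X ^+ a)).
rewrite /ssum size_rcons size_nseq big_ord_recr /= big1 ?add0r.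
  by rewrite nth_rcons size_nseq ltnn eqxx /hpF hLZ hLXn scalerAl.
move=> i _; rewrite nth_rcons size_nseq ltn_ord nth_nseq ltn_ord; exact: hpF0.
Qed.
Lemma inA_spanA h : inA h -> spanA h.
Proof.
case=> u ->; elim: u => [|t u IH]; first by exists [::]; rewrite /evA big_nil /ssum big_ord0.
rewrite /evA big_cons; apply: spanA_add => //; exact: spanA_mon.
Qed.

Lemma decx h : inA h -> exists a1 a2, [/\ inA a1, inA a2 & x * h = a1 * x + a2].
Proof.
case=> u ->; elim: u => [|[[k a] b] u [a1 [a2 [h1 h2 IH]]]].
  by exists 0, 0; rewrite /evA big_nil mulr0 mul0r addr0; split => //; exact: inA0.
rewrite /evA big_cons mulrDr IH /tA /=.
exists ((k * Q ^+ a * (Q^-1) ^+ b) *: (L ^+ a * p ^+ b) + a1).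
exists ((k * Q ^+ a * (kap * qn Q b)) *: (L ^+ a.+1 * p ^+ b.-1) + a2).
split; [apply: inAD => //; exact: inAmon | apply: inAD => //; exact: inAmon |].
rewrite -scalerAr [x * (_ * _)]mulrA xLn -scalerAl -[L ^+ a * x * _]mulrA xpn mulrDr -!scalerAr !scalerA.
rewrite scalerDr !scalerA mulrDl -!scalerAl !mulrA -exprSr.
by rewrite addrACA.
Qed.

Lemma inA_val (a : A1) : inA (val a).
Proof. by apply/asboolP; exact: (valP a). Qed.
Definition toA1 (h : H) (hh : inA h) : A1 := @MkA1 h (introT (asboolP (inA h)) hh).
Lemma toA1K h hh : val (@toA1 h hh) = h. Proof. by []. Qed.
Lemma inA_L : inA L. Proof. by have := inAmon 1 1 0; rewrite expr1 expr0 mulr1 scale1r. Qed.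
Lemma inA_p : inA p. Proof. by have := inAmon 1 0 1; rewrite expr1 expr0 mul1r scale1r. Qed.
Definition L1 : A1 := toA1 inA_L.
Definition p1 : A1 := toA1 inA_p.

Lemma decA1 (a : A1) : exists pr : A1 * A1, x * val a = val pr.1 * x + val pr.2.
Proof. by have [a1 [a2 [h1 h2 e]]] := decx (inA_val a); exists (toA1 h1, toA1 h2). Qed.
Definition sxdx (a : A1) : A1 * A1 := proj1_sig (cid (decA1 a)).
Definition sx (a : A1) : A1 := (sxdx a).1.
Definition dx (a : A1) : A1 := (sxdx a).2.
Lemma sxdx_spec a : x * val a = val (sx a) * x + val (dx a).
Proof. exact: (proj2_sig (cid (decA1 a))). Qed.

Definition oreF (a : A1) (i : nat) : H := val a * x ^+ i.
Lemma oreF0 i : oreF 0 i = 0. Proof. by rewrite /oreF raddf0 mul0r. Qed.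
Lemma oreFD i a b : oreF (a + b) i = oreF a i + oreF b i. Proof. by rewrite /oreF raddfD mulrDl. Qed.
Definition ore (c : seq A1) : H := ssum oreF c.

Lemma spanA1 (a : A1) : exists W, val a = ssum hpF W.
Proof. exact: inA_spanA (inA_val a). Qed.

Lemma indepH (c : seq A1) : ore c = 0 -> forall i, c`_i = 0.
Proof.
move=> h0; have /choice [rep hrep] : forall a : A1, exists W, val a = ssum hpF W by exact: spanA1.
pose m := (\max_(i < size c) size (rep (nth 0%R c i)))%N.
have hm i : (i < size c)%N -> (size (rep (nth 0%R c i)) <= m)%N.
  by move=> hi; exact: (@leq_bigmax _ (fun i : 'I_(size c) => size (rep (nth 0%R c i))) (Ordinal hi)).
have E : \sum_(i < size c) \sum_(j < m) hL ((rep c`_i)`_j) * p ^+ j * x ^+ i = 0.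
  apply: (etrans _ h0); rewrite /ore /ssum; apply: eq_bigr => i _.
  by rewrite /oreF hrep (@ssum_widen _ _ _ hpF0 _ m) ?mulr_suml // hm.
move=> i; case: (ltnP i (size c)) => hi; last by rewrite nth_default.
apply: val_inj; rewrite raddf0 hrep (@ssum_widen _ _ _ hpF0 _ m) ?hm // big1 // => j _.
by have /= -> := @indep_core _ _ (fun i j => (rep c`_i)`_j) E _ _ hi (ltn_ord j); rewrite hpF0.
Qed.

Lemma dec_uniq (a1 a2 b1 b2 : A1) : val a1 * x + val a2 = val b1 * x + val b2 -> a1 = b1 /\ a2 = b2.
Proof.
move=> e; have h0 : ore [:: a2 - b2; a1 - b1] = 0.
  rewrite /ore /ssum /= big_ord_recr /= big_ord1 /oreF /= expr0 expr1 mulr1 mulrBl; move: e => /= e.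
  by rewrite addrACA -opprD [aval a2 + _]addrC [aval b2 + _]addrC e subrr.
by split; apply/eqP; rewrite -subr_eq0; apply/eqP; [exact: (indepH h0 1) | exact: (indepH h0 0)].
Qed.

Lemma sxdx_eq (a a1 a2 : A1) : x * val a = val a1 * x + val a2 -> sx a = a1 /\ dx a = a2.
Proof. by move=> e; apply: dec_uniq; rewrite -sxdx_spec e. Qed.

Lemma sx_dx_B a b : sx (a - b) = sx a - sx b /\ dx (a - b) = dx a - dx b.
Proof. by apply: sxdx_eq; rewrite !raddfB mulrBr !sxdx_spec mulrBl opprD addrACA. Qed.
Lemma sx_dx_M a b : sx (a * b) = sx a * sx b /\ dx (a * b) = sx a * dx b + dx a * b.
Proof.
apply: sxdx_eq; rewrite !rmorphM rmorphD !rmorphM mulrA sxdx_spec mulrDl -mulrA sxdx_spec.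
by rewrite mulrDr !mulrA addrA.
Qed.
Lemma sx_dx_1 : sx 1 = 1 /\ dx 1 = 0.
Proof. by apply: sxdx_eq; rewrite rmorph1 raddf0 mulr1 mul1r addr0. Qed.
Lemma sx_dx_Z k a : sx (k *: a) = k *: sx a /\ dx (k *: a) = k *: dx a.
Proof. by apply: sxdx_eq; rewrite !linearZ -scalerAr sxdx_spec scalerDr scalerAl. Qed.

Lemma sx_zm : zmod_morphism sx. Proof. by move=> a b; case: (sx_dx_B a b). Qed.
Lemma dx_zm : zmod_morphism dx. Proof. by move=> a b; case: (sx_dx_B a b). Qed.
Lemma sx_mm : monoid_morphism sx.
Proof. by split; [case: sx_dx_1 | move=> a b; case: (sx_dx_M a b)]. Qed.
Lemma sx_sc : scalable sx. Proof. by move=> k a; case: (sx_dx_Z k a). Qed.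
Lemma dx_sc : scalable dx. Proof. by move=> k a; case: (sx_dx_Z k a). Qed.
Definition sxl : {lrmorphism A1 -> A1} := lrpack sx_zm sx_mm sx_sc.
Definition dxl : {linear A1 -> A1} := linpack dx_zm dx_sc.

Lemma ore_map (f : A1 -> A1) c : ore (map f c) = \sum_(i < size c) val (f c`_i) * x ^+ i.
Proof. by rewrite /ore /ssum size_map; apply: eq_bigr => i _; rewrite /oreF (nth_map 0). Qed.
Lemma ore_cons0 c : ore (0 :: c) = ore c * x.
Proof.
rewrite /ore /ssum /= big_ord_recl /oreF raddf0 mul0r add0r mulr_suml.
by apply: eq_bigr => i _; rewrite /= exprSr mulrA.
Qed.
Lemma ore_add c1 c2 : exists c, ore c1 + ore c2 = ore c.
Proof. by eexists; apply: ssum_add; [exact: oreF0 | exact: oreFD]. Qed.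

Definition Tp (h : H) : Prop := forall c : seq A1, exists c', h * ore c = ore c'.
Lemma Tp1 : Tp 1. Proof. by move=> c; exists c; rewrite mul1r. Qed.
Lemma Tp0 : Tp 0. Proof. by move=> c; exists [::]; rewrite mul0r /ore /ssum big_ord0. Qed.
Lemma TpD a b : Tp a -> Tp b -> Tp (a + b).
Proof.
move=> ha hb2 c; have [c1 e1] := ha c; have [c2 e2] := hb2 c.
by rewrite mulrDl e1 e2; exact: ore_add.
Qed.
Lemma TpZ k a : Tp a -> Tp (k *: a).
Proof.
move=> ha c; have [c1 e1] := ha c; exists (map (fun b => k *: b) c1).
rewrite -scalerAl e1 ore_map /ore /ssum scaler_sumr; apply: eq_bigr => i _.
by rewrite /oreF linearZ scalerAl.
Qed.
Lemma TpM a b : Tp a -> Tp b -> Tp (a * b).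
Proof.
move=> ha hb2 c; have [c1 e1] := hb2 c; have [c2 e2] := ha c1.
by exists c2; rewrite -mulrA e1 e2.
Qed.
Lemma TpL : Tp L.
Proof.
move=> c; exists (map (fun b => L1 * b) c); rewrite ore_map /ore /ssum mulr_sumr.
by apply: eq_bigr => i _; rewrite /oreF rmorphM mulrA.
Qed.
Lemma Tpp : Tp p.
Proof.
move=> c; exists (map (fun b => p1 * b) c); rewrite ore_map /ore /ssum mulr_sumr.
by apply: eq_bigr => i _; rewrite /oreF rmorphM mulrA.
Qed.
Lemma Tpx : Tp x.
Proof.
move=> c; have [c' e] := ore_add (0 :: map sx c) (map dx c); exists c'; rewrite -e.
rewrite ore_cons0 !ore_map mulr_suml -big_split /ore /ssum mulr_sumr.
apply: eq_bigr => i _; rewrite /oreF mulrA sxdx_spec mulrDl -mulrA -exprS.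
by rewrite exprSr mulrA.
Qed.

Definition Hpred : {pred H} := fun h => `[< Tp h >].
Lemma Hpred_closed : GRing.subsemialg_closed Hpred.
Proof.
split.
- exact/asboolP/Tp1.
- split; first exact/asboolP/Tp0.
  by move=> a b /asboolP ha /asboolP hb2; apply/asboolP/TpD.
- by move=> k a /asboolP ha; apply/asboolP/TpZ.
- by move=> a b /asboolP ha /asboolP hb2; apply/asboolP/TpM.
Qed.
HB.instance Definition _ := GRing.isSubalgClosed.Build C H Hpred Hpred_closed.
Record Hs := MkHs { hval : H; _ : hval \in Hpred }.
HB.instance Definition _ := [isSub for hval].
HB.instance Definition _ := [Choice of Hs by <:].
HB.instance Definition _ := [SubChoice_isSubAlgebra of Hs by <:].

Definition toHs (h : H) (hh : Tp h) : Hs := @MkHs h (introT (asboolP (Tp h)) hh).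
Definition xs := toHs Tpx.
Definition ps := toHs Tpp.
Definition Ls := toHs TpL.

Lemma relHs : heis_rel q hb xs ps Ls.
Proof.
case: relH => e1 e2 e3; split; apply: val_inj.
- by rewrite raddfB !linearZ !rmorphM /= scalerN.
- by rewrite !linearZ !rmorphM /=.
- by rewrite !linearZ !rmorphM /=.
Qed.

Lemma allTp h : Tp h.
Proof.
have [f [fx fp fL _]] := proj2 Hpres Hs xs ps Ls relHs.
have [f0 [_ _ _ uniq]] := proj2 Hpres H x p L relH.
pose g := fun h => val (f h).
have g_zm : zmod_morphism g by move=> a b; rewrite /g !raddfB.
have g_mm : monoid_morphism g by split; [rewrite /g !rmorph1 | move=> a b; rewrite /g !rmorphM].
have g_sc : scalable g by move=> k a; rewrite /g !linearZ.
have i_zm : zmod_morphism (@id H) by [].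
have i_mm : monoid_morphism (@id H) by [].
have i_sc : scalable (@id H) by [].
have e1 := uniq (lrpack g_zm g_mm g_sc); have e2 := uniq (lrpack i_zm i_mm i_sc).
have : val (f h) = h.
  rewrite -[RHS]/(lrpack i_zm i_mm i_sc h) e2 // -[LHS]/(lrpack g_zm g_mm g_sc h) e1 //.
  - exact: (etrans (congr1 val fx)).
  - exact: (etrans (congr1 val fp)).
  - exact: (etrans (congr1 val fL)).
by move=> <-; apply/asboolP; exact: (valP (f h)).
Qed.

Lemma spanH h : exists c, h = ore c.
Proof.
have [c e] := allTp h [:: 1]; exists c; rewrite -e.
by rewrite /ore /ssum /= big_ord1 /oreF rmorph1 expr0 !mulr1.
Qed.

Lemma val_i0 P : val (horner_alg L1 P) = hL P.
Proof.
apply: horner_morph_gen; [exact: raddf0 | exact: raddfD | exact: rmorphM | exact: rmorph1 | exact: val_sc].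
Qed.
Lemma valp1 : val p1 = p. Proof. by []. Qed.
Lemma valL1 : val L1 = L. Proof. by []. Qed.

Lemma A1_span (a : A1) : exists c : seq {poly C}, a = \sum_(i < size c) horner_alg L1 c`_i * p1 ^+ i.
Proof.
have [W e] := spanA1 a; exists W; apply: val_inj; rewrite e /ssum rmorph_sum.
by apply: eq_bigr => i _; rewrite rmorphM rmorphXn /hpF; congr (_ * _); exact/esym/val_i0.
Qed.

Lemma A1_indep (c : seq {poly C}) :
  \sum_(i < size c) horner_alg L1 c`_i * p1 ^+ i = 0 -> forall i, c`_i = 0.
Proof.
move=> e i.
have e' : \sum_(i0 < 1) \sum_(j < size c) hL ((fun _ j => c`_j) i0 j) * p ^+ j * x ^+ i0 = 0.
  rewrite big_ord1 expr0; under eq_bigr do rewrite mulr1.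
  have := congr1 val e; rewrite rmorph_sum raddf0 => e2; apply: (etrans _ e2).
  by apply: eq_bigr => j _; rewrite rmorphM rmorphXn; congr (_ * _); exact/esym/val_i0.
case: (ltnP i (size c)) => hi; last by rewrite nth_default.
exact: (@indep_core 1 (size c) (fun _ j => c`_j) e' 0 i erefl hi).
Qed.

Lemma p_hL P : p * hL P = hL (horner_alg (Q^-1 *: 'X) P) * p.
Proof.
elim/poly_ind: P => [|P c IH]; first by rewrite rmorph0 hL0 mulr0 mul0r.
rewrite rmorphD rmorphM /= horner_algX horner_algC alg_polyC !hLD !hLM hLZ hLX !hLC.
rewrite mulrDr mulrA IH -mulrA pL mulrDl mulr_algr -mulr_algl.
by rewrite mulr1 mulr_algl -!scalerAr -scalerAl mulrA.
Qed.

Lemma sx_L1 : sx L1 = Q *: L1 /\ dx L1 = 0.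
Proof. by apply: sxdx_eq; rewrite linearZ raddf0 addr0 -scalerAl /=; exact: xL. Qed.
Lemma sx_p1 : sx p1 = Q^-1 *: p1 /\ dx p1 = kap *: L1.
Proof. by apply: sxdx_eq; rewrite !linearZ -scalerAl /=; exact: xp. Qed.

Lemma sxD a b : sx (a + b) = sx a + sx b. Proof. exact: (rmorphD sxl). Qed.
Lemma sx0 : sx 0 = 0. Proof. exact: (rmorph0 sxl). Qed.
Lemma sxM a b : sx (a * b) = sx a * sx b. Proof. exact: (rmorphM sxl). Qed.
Lemma sx1 : sx 1 = 1. Proof. exact: (rmorph1 sxl). Qed.
Lemma sxX a n : sx (a ^+ n) = sx a ^+ n. Proof. exact: (rmorphXn sxl). Qed.
Lemma sxB a b : sx (a - b) = sx a - sx b. Proof. exact: (rmorphB sxl). Qed.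
Lemma sx_sum (I : Type) (r : seq I) (P : pred I) (F : I -> A1) :
  sx (\sum_(i <- r | P i) F i) = \sum_(i <- r | P i) sx (F i).
Proof. exact: (rmorph_sum sxl). Qed.

Lemma sx_i0 P : sx (horner_alg L1 P) = horner_alg L1 (horner_alg (Q *: 'X) P).
Proof.
rewrite halg_comp (@horner_morph_gen _ _ _ sx sx0 sxD sxM sx1 sx_sc) (proj1 sx_L1).
by rewrite hornerl_sc /= horner_algX.
Qed.

Lemma sx_form (c : seq {poly C}) :
  sx (\sum_(i < size c) horner_alg L1 c`_i * p1 ^+ i) =
  \sum_(i < size c) horner_alg L1 ((Q^-1) ^+ i *: horner_alg (Q *: 'X) c`_i) * p1 ^+ i.
Proof.
rewrite sx_sum; apply: eq_bigr => i _.
by rewrite sxM sxX sx_i0 (proj1 sx_p1) exprZn -scalerAr hornerl_sc scalerAl.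
Qed.

Lemma sx_inj0 a : sx a = 0 -> a = 0.
Proof.
have [W ->] := A1_span a; rewrite sx_form => h.
pose c := mkseq (fun i => (Q^-1) ^+ i *: horner_alg (Q *: 'X) W`_i) (size W).
have hc : \sum_(i < size c) horner_alg L1 c`_i * p1 ^+ i = 0.
  apply: (etrans _ h); rewrite size_mkseq; apply: eq_bigr => i _; by rewrite nth_mkseq.
have W0 i : (i < size W)%N -> W`_i = 0.
  move=> hi; have := A1_indep hc i; rewrite nth_mkseq // => /eqP.
  rewrite scaler_eq0 expf_eq0 invr_eq0 (negbTE Q0) andbF /= => /eqP e.
  by rewrite -(halg_scaleK Q0 W`_i) e rmorph0.
by rewrite big1 // => i _; rewrite W0 // rmorph0 mul0r.
Qed.

Lemma sx_surj b : exists a, sx a = b.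
Proof.
have [W ->] := A1_span b.
pose c := mkseq (fun i => Q ^+ i *: horner_alg (Q^-1 *: 'X) W`_i) (size W).
exists (\sum_(i < size c) horner_alg L1 c`_i * p1 ^+ i).
rewrite sx_form size_mkseq; apply: eq_bigr => i _; rewrite nth_mkseq //.
congr (_ * _); congr (horner_alg L1 _).
rewrite hornerl_sc scalerA -exprMn mulVf ?Q0 // expr1n scale1r.
have := @halg_scaleK _ (Q^-1) _ W`_i; rewrite invrK; apply; by rewrite invr_eq0 Q0.
Qed.

Lemma sx_bij : bijective sxl.
Proof.
have /choice [g hg] := sx_surj.
exists g => a /=; last exact: hg.
apply/eqP; rewrite -subr_eq0; apply/eqP/sx_inj0; by rewrite sxB hg subrr.
Qed.

Definition i0l : {lrmorphism {poly C} -> A1} := hornerl L1.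
Definition spl : {lrmorphism {poly C} -> {poly C}} := hornerl (Q^-1 *: 'X : {poly C}).
Lemma z_zm : zmod_morphism (fun _ : {poly C} => 0 : {poly C}). Proof. by move=> a b; rewrite subrr. Qed.
Lemma z_sc : scalable (fun _ : {poly C} => 0 : {poly C}). Proof. by move=> k a; rewrite scaler0. Qed.
Definition dpl : {linear {poly C} -> {poly C}} := linpack z_zm z_sc.

Lemma sp_bij : bijective spl.
Proof.
exists (horner_alg (Q *: 'X)) => P /=.
  by have := @halg_scaleK _ (Q^-1) _ P; rewrite invrK; apply; rewrite invr_eq0 Q0.
exact: halg_scaleK Q0 P.
Qed.

Lemma p1_i0 P : p1 * horner_alg L1 P = horner_alg L1 (horner_alg (Q^-1 *: 'X) P) * p1.
Proof.
apply: val_inj; rewrite !rmorphM.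
apply: etrans (_ : p * hL P = _); first by congr (_ * _); exact: val_i0.
by rewrite p_hL; congr (_ * _); exact/esym/val_i0.
Qed.

Lemma main_sec :
  exists (A1 : algType R[i])
         (i0 : {lrmorphism {poly R[i]} -> A1}) (i1 : {lrmorphism A1 -> H})
         (p1 : A1)
         (sp : {lrmorphism {poly R[i]} -> {poly R[i]}})
         (dp : {linear {poly R[i]} -> {poly R[i]}})
         (sx : {lrmorphism A1 -> A1}) (dx : {linear A1 -> A1}),
    [/\ [/\ bijective sp, sigma_derivation sp dp,
            bijective sx & sigma_derivation sx dx],
        [/\ sp 'X = (q%:C)^-1 *: 'X, dp 'X = 0,
            sx (i0 'X) = q%:C *: i0 'X & dx (i0 'X) = 0],
        sx p1 = (q%:C)^-1 *: p1 /\
          dx p1 = (iC R * hb%:C * (sqrtq q)^-1) *: i0 'X,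
        is_ore_ext i0 sp dp p1 /\ is_ore_ext i1 sx dx x
      & i1 p1 = p /\ i1 (i0 'X) = L ].
Proof.
exists (A1 : algType C), i0l, i1f, p1, spl, dpl, sxl, dxl.
split.
- split.
  + exact: sp_bij.
  + by move=> a b /=; rewrite mulr0 mul0r addr0.
  + exact: sx_bij.
  + by move=> a b; exact: (proj2 (sx_dx_M a b)).
- split.
  + exact: horner_algX.
  + by [].
  + by move: (proj1 sx_L1); rewrite -{1 2}(horner_algX L1).
  + by move: (proj2 sx_L1); rewrite -{1}(horner_algX L1).
- split; first exact: (proj1 sx_p1).
  by move: (proj2 sx_p1); rewrite -{1}(horner_algX L1).
- split; split.
  + by move=> P /=; rewrite rmorph0 addr0; exact: p1_i0.
  + exact: A1_span.
  + exact: A1_indep.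
  + move=> a; exact: sxdx_spec.
  + exact: spanH.
  + exact: indepH.
- split; first by [].
  by rewrite -[RHS]/(val L1) -(horner_algX L1).
Qed.
End Heis.

Theorem mainTheorem1 (R : realType) (q hb : R) (q_neq0 : q != 0)
    (H : algType R[i]) (x p L : H) (Hpres : heis_presentation q hb x p L) :
  exists (A1 : algType R[i])
         (i0 : {lrmorphism {poly R[i]} -> A1}) (i1 : {lrmorphism A1 -> H})
         (p1 : A1)
         (sp : {lrmorphism {poly R[i]} -> {poly R[i]}})
         (dp : {linear {poly R[i]} -> {poly R[i]}})
         (sx : {lrmorphism A1 -> A1}) (dx : {linear A1 -> A1}),
    [/\ [/\ bijective sp, sigma_derivation sp dp,
            bijective sx & sigma_derivation sx dx],
        [/\ sp 'X = (q%:C)^-1 *: 'X, dp 'X = 0,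
            sx (i0 'X) = q%:C *: i0 'X & dx (i0 'X) = 0],
        sx p1 = (q%:C)^-1 *: p1 /\
          dx p1 = (iC R * hb%:C * (sqrtq q)^-1) *: i0 'X,
        is_ore_ext i0 sp dp p1 /\ is_ore_ext i1 sx dx x
      & i1 p1 = p /\ i1 (i0 'X) = L ].
Proof. exact: main_sec. Qed.
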